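(* Let $\varphi$ be a finite conjunction of literals of the two forms $x\in y$ and $x = y\setminus z$ (with $x,y,z$ set variables), with finite set of variables $\mathrm{Vars}(\varphi)$. Let $M$ be a set assignment over $\mathrm{Vars}(\varphi)$ satisfying $\varphi$; let $\bar x,\bar y\in\mathrm{Vars}(\varphi)$, let $\overline{M}$ be a set assignment over $\mathrm{Vars}(\varphi)$ satisfying $\varphi$ with $\overline{M}\bar x\neq \overline{M}\bar y$, and let $\mathfrak{t}$ be a set belonging to exactly one of $\overline{M}\bar x$, $\overline{M}\bar y$. Fix a set $\mathfrak{s}$ with $\mathrm{rk}(\mathfrak{s})>\mathrm{rk}(M)$. Define $\mathsf{V}_0=\{u\in\mathrm{Vars}(\varphi)\mid \mathfrak{t}\in\overline{M}u\}$; $\mathsf{V}_n=\{u\in\mathrm{Vars}(\varphi)\mid Mu\cap\{Mw\mid w\in\mathsf{V}_{n-1}\}\neq\emptyset\}$ for $n\ge1$; $M_0v=Mv\cup\{\mathfrak{s}\}$ if $v\in\mathsf{V}_0$ and $M_0v=Mv$ otherwise; for $n\ge1$, $M_nv=M_{n-1}v\cup\{M_{n-1}u\mid u\in\mathsf{V}_{n-1},\ Mu\in Mv\}$ if $v\in\mathsf{V}_n$ and $M_nv=M_{n-1}v$ otherwise. Let $k\in\mathbb{N}$. Then: (a) if $\mathsf{V}_k=\emptyset$, then for all $n\ge k$ we have $\mathsf{V}_n=\emptyset$ and $M_n=M_k$; (b) if $\mathsf{V}_k\neq\emptyset$, then $k\le\min(|\mathrm{Vars}(\varphi)|-1,\ 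\mathrm{rk}(M))$.
   Context: A set assignment is a map from a finite set of set variables into the von Neumann universe $\mathcal{V}=\bigcup_\alpha\mathcal{V}_\alpha$, $\mathcal{V}_\alpha=\bigcup_{\beta<\alpha}\mathcal{P}(\mathcal{V}_\beta)$; it satisfies $x\in y$ iff $Mx\in My$ and $x=y\setminus z$ iff $Mx=My\setminus Mz$. The rank $\mathrm{rk}(s)$ of a set $s$ is the least ordinal $\alpha$ with $s\subseteq\mathcal{V}_\alpha$, and $\mathrm{rk}(M)=\max\{\mathrm{rk}(Mx)\mid x\in\mathrm{dom}(M)\}$. *)

(* Defs.v *)
(* Stdlib + mathcomp boot (seq) world.  Sets of the von Neumann universe are
   modelled by Aczel's well-founded trees with extensional equality. *)
From Stdlib Require Import ClassicalEpsilon.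
From mathcomp Require Import all_boot.

Set Implicit Arguments.
Unset Strict Implicit.
Unset Printing Implicit Defensive.

Inductive V : Type := sup : forall (A : Type), (A -> V) -> V.
Arguments sup : clear implicits.

Definition idx (x : V) : Type := match x with sup A _ => A end.
Definition elt (x : V) : idx x -> V := match x with sup _ f => f end.
Arguments elt : clear implicits.

Fixpoint Veq (x y : V) {struct x} : Prop :=
  match x, y with
  | sup A f, sup B g =>
      (forall a, exists b, Veq (f a) (g b)) /\ (forall b, exists a, Veq (f a) (g b))
  end.

Definition Vin (x y : V) : Prop := exists b : idx y, Veq x (elt y b).
Definition Vsub (x y : V) : Prop := forall z, Vin z x -> Vin z y.

Definition Vsingleton (s : V) : V := sup unit (fun _ => s).
Definition Vunion (x y : V) : V :=
  sup (idx x + idx y)%type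
      (fun p => match p with inl a => elt x a | inr b => elt y b end).
Definition Vdiff (x y : V) : V :=
  sup {a : idx x | ~ Vin (elt x a) y} (fun p => elt x (proj1_sig p)).
Definition Vbigcup (I : Type) (F : I -> V) : V :=
  sup {i : I & idx (F i)} (fun p => elt (F (projT1 p)) (projT2 p)).
Definition Vsucc (o : V) : V := Vunion o (Vsingleton o).

(** rank: rk(x) = \bigcup_{y \in x} (rk(y) + 1), i.e. the least ordinal alpha
    with x \subseteq V_alpha; ordinals compared by membership (<) and
    inclusion (<=). *)
Fixpoint rk (x : V) : V :=
  match x with sup A f => Vbigcup (fun a : A => Vsucc (rk (f a))) end.

Fixpoint vnat (n : nat) : V :=
  match n with
  | 0 => sup False (fun f : False => match f with end)
  | S n => Vsucc (vnat n)
  end.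

Inductive lit : Type :=
| LMem  (x y : nat)
| LDiff (x y z : nat).

Definition lit_vars (l : lit) : seq nat :=
  match l with LMem x y => [:: x; y] | LDiff x y z => [:: x; y; z] end.

Definition formula := list lit.

Definition Vars (phi : formula) : seq nat := undup (flatten (map lit_vars phi)).

(** a set assignment: only its values on Vars(phi) matter *)
Definition assignment := nat -> V.

Definition lit_sat (M : assignment) (l : lit) : Prop :=
  match l with
  | LMem x y => Vin (M x) (M y)
  | LDiff x y z => Veq (M x) (Vdiff (M y) (M z))
  end.

Definition sat (M : assignment) (phi : formula) : Prop :=
  forall l, List.In l phi -> lit_sat M l.

Fixpoint Vset (phi : formula) (M Mbar : assignment) (t : V) (n : nat) : nat -> Prop :=
  match n with
  | 0 => fun u => u \in Vars phi /\ Vin t (Mbar u)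
  | S n' => fun u => u \in Vars phi /\
        exists z, Vin z (M u) /\ exists w, Vset phi M Mbar t n' w /\ Veq z (M w)
  end.

Fixpoint Mn (phi : formula) (M Mbar : assignment) (t s : V) (n : nat) : assignment :=
  match n with
  | 0 => fun v =>
      if excluded_middle_informative (Vset phi M Mbar t 0 v)
      then Vunion (M v) (Vsingleton s) else M v
  | S n' => fun v =>
      if excluded_middle_informative (Vset phi M Mbar t (S n') v)
      then Vunion (Mn phi M Mbar t s n' v)
             (sup {u : nat | Vset phi M Mbar t n' u /\ Vin (M u) (M v)}
                  (fun p => Mn phi M Mbar t s n' (proj1_sig p)))
      else Mn phi M Mbar t s n' v
  end.

(* Main.v *)
Require Import Defs.
From Stdlib Require Import ClassicalEpsilon Classical.
From mathcomp Require Import all_boot.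
From mathcomp Require Import zify.
Set Implicit Arguments.
Unset Strict Implicit.

Lemma Veq_refl x : Veq x x.
Proof. induction x as [A f IH]; simpl; split; intro a; exists a; apply IH. Qed.

Lemma Veq_sym x y : Veq x y -> Veq y x.
Proof.
revert y; induction x as [A f IH]; intros [B g]; simpl; intros [H1 H2]; split.
- intro b; destruct (H2 b) as [a Ha]; exists a; apply IH; exact Ha.
- intro a; destruct (H1 a) as [b Hb]; exists b; apply IH; exact Hb.
Qed.

Lemma Veq_trans x y z : Veq x y -> Veq y z -> Veq x z.
Proof.
revert y z; induction x as [A f IH]; intros [B g] [C h]; simpl; intros [H1 H2] [H3 H4]; split.
- intro a; destruct (H1 a) as [b Hb]; destruct (H3 b) as [c Hc]; exists c; eapply IH; eauto.
- intro c; destruct (H4 c) as [b Hb]; destruct (H2 b) as [a Ha]; exists a; eapply IH; eauto.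
Qed.

Lemma Vin_eql x x' y : Veq x x' -> Vin x y -> Vin x' y.
Proof. intros E [b Hb]; exists b; eapply Veq_trans; [apply Veq_sym; exact E| exact Hb]. Qed.

Lemma Vin_eqr x y y' : Veq y y' -> Vin x y -> Vin x y'.
Proof.
destruct y as [B g], y' as [C h]; simpl; intros [H1 H2] [b Hb].
destruct (H1 b) as [c Hc]; exists c; eapply Veq_trans; eauto.
Qed.

Lemma Veq_ext x y : (forall z, Vin z x -> Vin z y) -> (forall z, Vin z y -> Vin z x) -> Veq x y.
Proof.
destruct x as [A f], y as [B g]; intros H1 H2; simpl; split.
- intro a; destruct (H1 (f a)) as [b Hb]; [exists a; apply Veq_refl|]; exists b; exact Hb.
- intro b; destruct (H2 (g b)) as [a Ha]; [exists b; apply Veq_refl|]; exists a; apply Veq_sym; exact Ha.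
Qed.

Lemma Vin_irrefl x : ~ Vin x x.
Proof.
induction x as [A f IH]; intros [a Ha]; apply (IH a).
eapply Vin_eqr; [exact Ha|]. exists a; apply Veq_refl.
Qed.

Lemma Vin_union z x y : Vin z (Vunion x y) <-> Vin z x \/ Vin z y.
Proof.
unfold Vunion, Vin; simpl; split.
- intros [[a|b] H]; [left; exists a | right; exists b]; exact H.
- intros [[a H]|[b H]]; [exists (inl a) | exists (inr b)]; exact H.
Qed.

Lemma Vin_single z s : Vin z (Vsingleton s) <-> Veq z s.
Proof. split; [intros [u H]|intro H; exists tt]; exact H. Qed.

Lemma Vin_bigcup I (F : I -> V) z : Vin z (Vbigcup F) <-> exists i, Vin z (F i).
Proof.
split.
- intros [[i b] H]; exists i, b; exact H.
- intros [i [b H]]; exists (existT _ i b); exact H.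
Qed.

Lemma Vin_succ z o : Vin z (Vsucc o) <-> Vin z o \/ Veq z o.
Proof. unfold Vsucc; rewrite Vin_union Vin_single; tauto. Qed.

Lemma Vin_rk z A f : Vin z (rk (sup A f)) <-> exists a, Vin z (rk (f a)) \/ Veq z (rk (f a)).
Proof.
simpl rk; rewrite Vin_bigcup; split; intros [a H]; exists a; [apply Vin_succ|apply Vin_succ]; exact H.
Qed.

Lemma rk_eq x y : Veq x y -> Veq (rk x) (rk y).
Proof.
revert y; induction x as [A f IH]; intros [B g] E; pose proof E as E'; simpl in E; destruct E as [H1 H2].
apply Veq_ext; intros z Hz; apply Vin_rk in Hz as [a Ha]; apply Vin_rk.
- destruct (H1 a) as [b Hb]; exists b; pose proof (IH a _ Hb) as R.
  destruct Ha as [Ha|Ha]; [left; eapply Vin_eqr; eauto | right; eapply Veq_trans; eauto].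
- destruct (H2 a) as [b Hb]; exists b; pose proof (Veq_sym (IH b _ Hb)) as R0.
  destruct Ha as [Ha|Ha]; [left; eapply Vin_eqr; eauto | right; eapply Veq_trans; eauto].
Qed.

Lemma rk_mem x y : Vin x y -> Vin (rk x) (rk y) /\ Vsub (rk x) (rk y).
Proof.
destruct y as [B g]; intros [b Hb]; pose proof (rk_eq Hb) as R; split.
- apply Vin_rk; exists b; right; exact R.
- intros z Hz; apply Vin_rk; exists b; left; eapply Vin_eqr; eauto.
Qed.

Lemma Vin_vnat z n : Vin z (vnat n) <-> exists m, m < n /\ Veq z (vnat m).
Proof.
induction n as [|n IH].
- split; [intros [[] _] | intros [m [Hm _]]; done].
- change (vnat n.+1) with (Vsucc (vnat n)); rewrite Vin_succ IH; split.
  + intros [[m [Hm E]]|E]; [exists m; split; [lia|exact E] | exists n; split; [lia|exact E]].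
  + intros [m [Hm E]]. have [Hmn|Hne] := eqVneq m n; [subst m; right; exact E|].
    left; exists m; split; [lia|exact E].
Qed.

Lemma vnat_in m n : m < n -> Vin (vnat m) (vnat n).
Proof. intro H; apply Vin_vnat; exists m; split; [exact H|apply Veq_refl]. Qed.

Lemma vnat_inj m n : Veq (vnat m) (vnat n) -> m = n.
Proof.
intro E; case: (ltngtP m n) => // H.
- exfalso; apply (@Vin_irrefl (vnat m)); eapply Vin_eqr; [apply Veq_sym; exact E| apply vnat_in; exact H].
- exfalso; apply (@Vin_irrefl (vnat n)); eapply Vin_eqr; [exact E| apply vnat_in; exact H].
Qed.

Lemma min_ex (B : nat -> Prop) n : B n -> exists M, B M /\ forall m, m < M -> ~ B m.
Proof.
suff: forall N k, k <= N -> B k -> exists M, B M /\ forall m, m < M -> ~ B m.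
  by move=> H; apply: (H n n).
elim=> [|N IH] k Hk Bk.
- exists k; split => // m Hm; lia.
- destruct (classic (exists m, m < k /\ B m)) as [[m [Hm Bm]]|Hno].
  + apply: (IH m) => //; lia.
  + exists k; split => // m Hm Bm; apply Hno; exists m; auto.
Qed.

Lemma rk_tri y : forall n, Vin (vnat n) (rk y) \/ Veq (vnat n) (rk y) \/
  exists m, m < n /\ Veq (rk y) (vnat m).
Proof.
induction y as [A f IH]; intro n.
destruct (classic (exists a, Vin (vnat n) (rk (f a)) \/ Veq (vnat n) (rk (f a)))) as [[a Ha]|Hno].
- left; apply Vin_rk; exists a; exact Ha.
- assert (Hf : forall a, exists m, m < n /\ Veq (rk (f a)) (vnat m)).
  { intro a; destruct (IH a n) as [H|[H|H]]; [exfalso; apply Hno; eauto|exfalso; apply Hno; eauto|exact H]. }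
  pose B := fun M => forall a m, Veq (rk (f a)) (vnat m) -> m < M.
  assert (Bn : B n).
  { intros a m Hm; destruct (Hf a) as [m0 [Hm0 E]].
    have := vnat_inj (Veq_trans (Veq_sym Hm) E) => ->; exact Hm0. }
  destruct (min_ex Bn) as [M [BM Mmin]].
  assert (E : Veq (rk (sup A f)) (vnat M)).
  { apply Veq_ext.
    - intros z Hz; apply Vin_rk in Hz as [a Ha]; destruct (Hf a) as [m0 [_ E0]].
      have L := BM a m0 E0. apply Vin_vnat. destruct Ha as [Ha|Ha].
      + have := Vin_eqr E0 Ha; rewrite Vin_vnat => -[m [Hm Em]]; exists m; split; [lia|exact Em].
      + exists m0; split; [exact L|eapply Veq_trans; eauto].
    - intros z Hz; apply Vin_vnat in Hz as [m [Hm Ez]].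
      have NB := Mmin m Hm. unfold B in NB.
      apply not_all_ex_not in NB as [a NB]; apply not_all_ex_not in NB as [m' NB].
      apply imply_to_and in NB as [E' NB].
      apply Vin_rk; exists a. have [Heq|Hne] := eqVneq m m'.
      + subst m'; right; eapply Veq_trans; [exact Ez| apply Veq_sym; exact E'].
      + left; eapply Vin_eqr; [apply Veq_sym; exact E'|].
        eapply Vin_eql; [apply Veq_sym; exact Ez|]. apply vnat_in. lia. }
  have HM : M <= n.
  { case: (leqP M n) => // H; exfalso; exact (Mmin n H Bn). }
  have [HMn|HMn] := eqVneq M n.
  + subst M; right; left; apply Veq_sym; exact E.
  + right; right; exists M; split; [lia|exact E].
Qed.

Lemma rk_chain j x y : Vsub (vnat j) (rk x) -> Vin x y -> Vsub (vnat j.+1) (rk y).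
Proof.
intros Hs Hxy z Hz; change (vnat j.+1) with (Vsucc (vnat j)) in Hz.
destruct (rk_mem Hxy) as [Hin Hsub].
apply Vin_succ in Hz as [Hz|Hz]; [apply Hsub, Hs, Hz|].
eapply Vin_eql; [apply Veq_sym; exact Hz|].
destruct (rk_tri x j) as [H|[H|[m [Hm H]]]].
- apply Hsub, H.
- eapply Vin_eql; [apply Veq_sym; exact H|exact Hin].
- exfalso. have H1 : Vin (vnat m) (rk x) by apply Hs, vnat_in.
  apply (@Vin_irrefl (vnat m)); eapply Vin_eqr; [exact H|exact H1].
Qed.

Lemma Vset_vars phi M Mbar t i u : Vset phi M Mbar t i u -> u \in Vars phi.
Proof. by case: i => [|i] /= [H _]. Qed.

Lemma chain_ex phi M Mbar t k u : Vset phi M Mbar t k u ->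
  exists w : nat -> nat, w k = u /\ (forall i, i <= k -> Vset phi M Mbar t i (w i)) /\
    (forall i, i < k -> Vin (M (w i)) (M (w i.+1))).
Proof.
elim: k u => [|k IH] u H.
- exists (fun _ => u); split => //; split.
  + move=> i; rewrite leqn0 => /eqP ->; exact H.
  + by [].
- pose proof H as H0; simpl in H; destruct H as [_ [z [Hz [w' [Hw' Ez]]]]].
  destruct (IH w' Hw') as [w [Hwk [Hw1 Hw2]]].
  exists (fun i => if i == k.+1 then u else w i); split; [by rewrite eqxx|split].
  + move=> i Hi; have [->|Hne] := eqVneq i k.+1; [exact H0|apply Hw1; lia].
  + move=> i Hi; have -> : (i == k.+1) = false by apply/eqP; lia.
    have [->|Hne] := eqVneq i k.
    * rewrite eqxx Hwk; eapply Vin_eql; [exact Ez|exact Hz].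
    * have -> : (i.+1 == k.+1) = false by apply/eqP; lia.
      apply Hw2; lia.
Qed.

Theorem lemma3 (phi : formula) (M : assignment) (xb yb : nat)
  (Mbar : assignment) (t s : V) (k : nat) :
  sat M phi ->
  xb \in Vars phi -> yb \in Vars phi ->
  sat Mbar phi ->
  ~ Veq (Mbar xb) (Mbar yb) ->
  ((Vin t (Mbar xb) /\ ~ Vin t (Mbar yb)) \/ (Vin t (Mbar yb) /\ ~ Vin t (Mbar xb))) ->
  (* rk(s) > rk(M) = max_{u in Vars phi} rk(M u) *)
  (forall u, u \in Vars phi -> Vin (rk (M u)) (rk s)) ->
  ((forall u, ~ Vset phi M Mbar t k u) ->
     forall n, k <= n ->
       (forall u, ~ Vset phi M Mbar t n u) /\
       (forall v, v \in Vars phi -> Veq (Mn phi M Mbar t s n v) (Mn phi M Mbar t s k v)))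
  /\
  ((exists u, Vset phi M Mbar t k u) ->
     k <= size (Vars phi) - 1 /\
     (* k <= rk(M) = max_{u in Vars phi} rk(M u) *)
     exists u, u \in Vars phi /\ Vsub (vnat k) (rk (M u))).
Proof.
move=> _ _ _ _ _ _ _; split.
- move=> Hk.
  have Emp : forall n, k <= n -> forall u, ~ Vset phi M Mbar t n u.
  { elim=> [|n IH] Hn u.
    - by move: Hn; rewrite leqn0 => /eqP <-; apply Hk.
    - have [<-|Hne] := eqVneq k n.+1; [apply Hk|].
      move=> /= [_ [z [_ [w [Hw _]]]]]; apply: (IH _ w Hw); lia. }
  move=> n Hn; split; [exact: Emp|].
  move=> v _; elim: n Hn => [|n IH] Hn.
  + move: Hn; rewrite leqn0 => /eqP ->; apply Veq_refl.
  + have [<-|Hne] := eqVneq k n.+1; [apply Veq_refl|].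
    simpl; case: excluded_middle_informative => h.
    * exfalso; apply: (Emp n.+1 Hn v); exact h.
    * apply IH; lia.
- move=> [u Hu]; destruct (chain_ex Hu) as [w [Hwk [Hw1 Hw2]]].
  have Rinc : forall i j, i < j -> j <= k -> Vin (rk (M (w i))) (rk (M (w j))).
  { move=> i; elim=> [|j IH] // Hij Hj.
    have [->|Hne] := eqVneq i j.
    - exact: (proj1 (rk_mem (Hw2 j Hj))).
    - apply: (proj2 (rk_mem (Hw2 j Hj))); apply IH; lia. }
  split.
  + have Hinj : {in iota 0 k.+1 &, injective w}.
    { move=> i j; rewrite !mem_iota /= => Hi Hj Eij.
      case: (ltngtP i j) => // H; exfalso.
      - have := Rinc i j H ltac:(lia); rewrite Eij; apply Vin_irrefl.
      - have := Rinc j i H ltac:(lia); rewrite Eij; apply Vin_irrefl. }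
    have Hu1 : uniq (map w (iota 0 k.+1)) by rewrite (map_inj_in_uniq Hinj) iota_uniq.
    have Hsub : {subset map w (iota 0 k.+1) <= Vars phi}.
    { move=> x /mapP [i]; rewrite mem_iota /= => Hi ->.
      apply: (@Vset_vars phi M Mbar t i); apply Hw1; lia. }
    have := uniq_leq_size Hu1 Hsub; rewrite size_map size_iota => HH.
    by move: HH; case: (size (Vars phi)) => // n; rewrite subn1.
  + exists u; split; [exact: (Vset_vars Hu)|].
    rewrite -Hwk.
    have : forall j, j <= k -> Vsub (vnat j) (rk (M (w j))).
    { elim=> [|j IH] Hj.
      - by move=> z [[] _].
      - apply: rk_chain; [apply IH; lia|apply Hw2; lia]. }
    by move=> H; apply H.
Qed.
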